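(* Let $F$ be a field, $n\in\mathbb N\cup\{\infty\}$, and let $\varphi:\mathrm{UT}(n,F)\to\mathrm{UT}(n,F)$ be an almost identity PC-map. Then for every $a\in\mathrm{UT}(n,F)$ we have $\varphi(a)_{ij}=a_{ij}$ and $(\varphi(a)^{-1})_{ij}=(a^{-1})_{ij}$ for all indices $i\ge 2$ and $j\le n-1$ (when $n=\infty$, $j\le n-1$ means $j$ arbitrary). In other words, $\varphi(a)$ and $a$ (and also their inverses) can differ only in the first row and the last column.
   Context: $F$ is a field and $n\in\mathbb N\cup\{\infty\}$. $\mathrm{UT}(n,F)$ is the group of upper unitriangular $n\times n$ matrices over $F$; for $n=\infty$ the rows and columns are indexed by $\mathbb N=\{1,2,\dots\}$ and $\mathrm{UT}(\infty,F)$ consists of all $\mathbb N\times\mathbb N$ matrices with $1$ on the diagonal and $0$ below it. Convention: $\infty+m=\infty$ for $m\in\mathbb Z$. $e$ is the identity matrix, $e_{ij}$ the matrix unit, $t_{ij}(\alpha)=e+\alpha e_{ij}$ ($i<j$, $\alpha\in F$) the elementary transvection. $a_{ij}$ denotes the $(i,j)$-entry of $a$. The group commutator is $[x,y]=xyx^{-1}y^{-1}$. A PC-map of a group $G$ is a bijection $\varphi:G\to G$ with $\varphi([x,y])=[\varphi(x),\varphi(y)]$ for all $x,y\in G$. A map $\varphi:\mathrm{UT}(n,F)\to\mathrm{UT}(n,F)$ is almost identity if $\varphi(t_{ij}(\alpha))=t_{ij}(\alpha)$ for all $i<j$ and $\alpha\in F$. *)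

(* Defs.v *)
From HB Require Import structures.
From mathcomp Require Import all_boot all_order all_algebra.
Set Implicit Arguments. Unset Strict Implicit. Unset Printing Implicit Defensive.
Import GRing.Theory.
Local Open Scope ring_scope.

(* Dimension n ∈ ℕ ∪ {∞}: [Some m] is the finite size m, [None] is ∞. *)
Definition dimn := option nat.

(* Indices are 1-based: i is a valid index iff 1 <= i <= n (1 <= i when n = ∞). *)
Definition inrange (n : dimn) (i : nat) : bool :=
  (1 <= i)%N && (if n is Some m then (i <= m)%N else true).

(* Matrices indexed by nat × nat; entries at invalid indices are meaningless
   and normalised to 0 for members of UT(n,F). *)
Definition mx (F : fieldType) := nat -> nat -> F.

Definition idm (F : fieldType) (n : dimn) : mx F :=
  fun i j => ((inrange n i) && (i == j))%:R.

Definition isUT (F : fieldType) (n : dimn) (a : mx F) : Prop :=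
  forall i j, ~~ [&& inrange n i, inrange n j & (i < j)%N] -> a i j = idm F n i j.

(* matrix product; for upper triangular matrices the (i,j) entry only
   involves k with i <= k <= j, so it is a finite sum even for n = ∞. *)
Definition mxmul (F : fieldType) (a b : mx F) : mx F :=
  fun i j => \sum_(i <= k < j.+1) a i k * b k j.

(* inverse of a unitriangular matrix: a^{-1} = Σ_m (e - a)^m, where
   ((e-a)^m)_{ij} = 0 for m > j - i, so the sum is finite entrywise. *)
Definition mxinv (F : fieldType) (n : dimn) (a : mx F) : mx F :=
  let N := fun i j => idm F n i j - a i j in
  fun i j => \sum_(m < (j - i).+1) iter m (mxmul N) (idm F n) i j.

Definition comm (F : fieldType) (n : dimn) (x y : mx F) : mx F :=
  mxmul (mxmul (mxmul x y) (mxinv n x)) (mxinv n y).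

Definition transv (F : fieldType) (n : dimn) (i j : nat) (alpha : F) : mx F :=
  fun k l => idm F n k l + (if (k == i) && (l == j) then alpha else 0).

Definition is_PCmap (F : fieldType) (n : dimn) (phi : mx F -> mx F) : Prop :=
  [/\ (forall a, isUT n a -> isUT n (phi a)),
      (forall a b, isUT n a -> isUT n b -> phi a = phi b -> a = b),
      (forall b, isUT n b -> exists a, isUT n a /\ phi a = b)
    & (forall x y, isUT n x -> isUT n y -> phi (comm n x y) = comm n (phi x) (phi y))].

Definition almost_identity (F : fieldType) (n : dimn) (phi : mx F -> mx F) : Prop :=
  forall i j (alpha : F), inrange n i -> inrange n j -> (i < j)%N ->
    phi (transv n i j alpha) = transv n i j alpha.

(* Main.v *)
Require Import Defs.
From mathcomp Require Import all_boot all_order all_algebra zify ring.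
From Stdlib Require Import FunctionalExtensionality.
Set Implicit Arguments. Unset Strict Implicit. Unset Printing Implicit Defensive.
Import GRing.Theory.
Local Open Scope ring_scope.

Lemma sum_delta (F : fieldType) (lo hi q : nat) (f : nat -> F) :
  \sum_(lo <= k < hi) (if k == q then f k else 0) =
  if (lo <= q)%N && (q < hi)%N then f q else 0.
Proof.
elim: hi => [|hi IH]; first by rewrite big_geq // ltn0 andbF.
case: (leqP lo hi) => Hl.
  rewrite big_nat_recr //= IH.
  case: (eqVneq hi q) => [E|Hne].
    subst hi.
    have -> : (q < q)%N = false by rewrite ltnn.
    by rewrite andbF add0r Hl ltnSn.
  rewrite addr0; congr (if _ then _ else _); apply/idP/idP => /andP[H1 H2]; apply/andP; split => //; lia.
rewrite big_geq //.
case: ifP => // /andP[H1 H2]; lia.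
Qed.

Lemma idmE_l (F : fieldType) n i k : idm F n i k = if k == i then (inrange n i)%:R else 0.
Proof. by rewrite /idm; case: (eqVneq k i) => _; rewrite ?andbT ?andbF. Qed.
Lemma idmE_r (F : fieldType) n k j : idm F n k j = if k == j then (inrange n j)%:R else 0.
Proof. rewrite /idm; case: (eqVneq k j) => [->|_]; by rewrite ?andbT ?andbF. Qed.
Lemma idm_outl (F : fieldType) n i j : ~~ inrange n i -> idm F n i j = 0.
Proof. by rewrite /idm => /negbTE ->. Qed.
Lemma idm_outr (F : fieldType) n i j : ~~ inrange n j -> idm F n i j = 0.
Proof. by rewrite idmE_r => /negbTE ->; case: ifP. Qed.
Lemma idm_neq (F : fieldType) n i j : i != j -> idm F n i j = 0.
Proof. by rewrite idmE_r => /negbTE ->. Qed.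

Lemma UT_ge (F : fieldType) n (a : mx F) i j : isUT n a -> (j <= i)%N -> a i j = idm F n i j.
Proof. move=> H hij; apply: H; rewrite ltnNge hij; by rewrite !andbF. Qed.
Lemma UT_lt (F : fieldType) n (a : mx F) i j : isUT n a -> (j < i)%N -> a i j = 0.
Proof. move=> H hij; rewrite (UT_ge H) ?idm_neq //; [lia|lia]. Qed.
Lemma UT_outl (F : fieldType) n (a : mx F) {i j : nat} : isUT n a -> ~~ inrange n i -> a i j = 0.
Proof. by move=> H hi; rewrite H ?idm_outl // (negbTE hi). Qed.
Lemma UT_outr (F : fieldType) n (a : mx F) {i j : nat} : isUT n a -> ~~ inrange n j -> a i j = 0.
Proof. by move=> H hi; rewrite H ?idm_outr // (negbTE hi) andbF. Qed.
Lemma UT_diag (F : fieldType) n (a : mx F) i : isUT n a -> a i i = (inrange n i)%:R.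
Proof. by move=> H; rewrite (UT_ge H) // /idm eqxx andbT. Qed.

Lemma idm_UT (F : fieldType) n : isUT n (idm F n).
Proof. by []. Qed.

Lemma mul1M (F : fieldType) n (a : mx F) : isUT n a -> mxmul (idm F n) a = a.
Proof.
move=> H; apply: functional_extensionality => i; apply: functional_extensionality => j.
rewrite /mxmul.
under eq_bigr => k _ do rewrite idmE_l (fun_if (fun x => x * a k j)) mul0r.
rewrite sum_delta leqnn /=.
case: (inrange n i) / idP => Hi; last by rewrite mul0r if_same (UT_outl H) //; apply/negP.
rewrite mul1r ltnS; case: leqP => // hij; by rewrite (UT_lt H).
Qed.

Lemma mulM1 (F : fieldType) n (a : mx F) : isUT n a -> mxmul a (idm F n) = a.
Proof.
move=> H; apply: functional_extensionality => i; apply: functional_extensionality => j.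
rewrite /mxmul.
under eq_bigr => k _ do rewrite idmE_r (fun_if (fun x => a i k * x)) mulr0.
rewrite sum_delta ltnSn andbT.
case: (inrange n j) / idP => Hj; last by rewrite mulr0 if_same (UT_outr H) //; apply/negP.
rewrite mulr1; case: leqP => // hij; by rewrite (UT_lt H).
Qed.

Lemma mxmul_UT (F : fieldType) n (a b : mx F) : isUT n a -> isUT n b -> isUT n (mxmul a b).
Proof.
move=> Ha Hb i j H; rewrite /mxmul.
case: (ltngtP i j) => hij.
- case: (inrange n i) / idP => Hi.
    have Hj : ~~ inrange n j by move: H; rewrite Hi hij andbT.
    rewrite idm_outr // big1 // => k _; by rewrite (UT_outr Hb) ?mulr0.
  rewrite idm_outl; last by apply/negP.
  rewrite big1 // => k _; rewrite (UT_outl Ha) ?mul0r //; by apply/negP.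
- by rewrite big_geq // idm_neq //; lia.
- subst j; rewrite big_nat1 (@UT_diag _ _ _ i Ha) (@UT_diag _ _ _ i Hb) /idm eqxx andbT.
  by case: (inrange n i); rewrite ?mul1r ?mul0r.
Qed.

Lemma tri_exchange (F : fieldType) (i J : nat) (f : nat -> nat -> F) :
  \sum_(i <= k < J) \sum_(i <= l < k.+1) f l k = \sum_(i <= l < J) \sum_(l <= k < J) f l k.
Proof.
elim: J => [|J IH]; first by rewrite !big_geq.
case: (leqP i J) => hiJ; last by rewrite !big_geq.
rewrite big_nat_recr //= IH [in RHS]big_nat_recr //= big_nat1.
rewrite [X in _ + X = _]big_nat_recr //= addrA; congr (_ + _).
rewrite -big_split /=; apply: eq_big_nat => l /andP[_ hl].
rewrite big_nat_recr //=; lia.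
Qed.

Lemma mxmulA (F : fieldType) (a b c : mx F) : mxmul (mxmul a b) c = mxmul a (mxmul b c).
Proof.
apply: functional_extensionality => i; apply: functional_extensionality => j.
rewrite /mxmul.
under eq_bigr => k _ do rewrite mulr_suml.
rewrite tri_exchange; apply: eq_bigr => l _; rewrite mulr_sumr; apply: eq_bigr => k _.
by rewrite mulrA.
Qed.

Definition Nm (F : fieldType) n (a : mx F) : mx F := fun i j => idm F n i j - a i j.
Definition Pw (F : fieldType) n (a : mx F) m : mx F := iter m (mxmul (Nm n a)) (idm F n).

Lemma mxinvE (F : fieldType) n (a : mx F) i j :
  mxinv n a i j = \sum_(m < (j - i).+1) Pw n a m i j.
Proof. by []. Qed.

Lemma PwS (F : fieldType) n (a : mx F) m i j :
  Pw n a m.+1 i j = \sum_(i <= k < j.+1) Nm n a i k * Pw n a m k j.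
Proof. by []. Qed.

Lemma Nz (F : fieldType) n (a : mx F) {k l : nat} : isUT n a ->
  ~~ [&& inrange n k, inrange n l & (k < l)%N] -> Nm n a k l = 0.
Proof. by move=> H h; rewrite /Nm H // subrr. Qed.

Lemma P_outr (F : fieldType) n (a : mx F) m {k l : nat} : isUT n a ->
  ~~ inrange n l -> Pw n a m k l = 0.
Proof.
move=> H hl; elim: m k => [|m IH] k; first by rewrite /= idm_outr.
by rewrite PwS big1 // => r _; rewrite IH mulr0.
Qed.

Lemma P_outl (F : fieldType) n (a : mx F) m {k l : nat} : isUT n a ->
  ~~ inrange n k -> Pw n a m k l = 0.
Proof.
move=> H hk; case: m => [|m]; first by rewrite /= idm_outl.
by rewrite PwS big1 // => r _; rewrite (Nz H) ?mul0r // (negbTE hk).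
Qed.

Lemma P_high (F : fieldType) n (a : mx F) m {k l : nat} : isUT n a ->
  (l < k + m)%N -> (k != l) || (0 < m)%N -> Pw n a m k l = 0.
Proof.
move=> H; elim: m k => [|m IH] k.
  by rewrite addn0 orbF /= => _ /idm_neq.
move=> hl _; rewrite PwS big1 // => r _.
case: (ltnP k r) => hkr.
  rewrite IH ?mulr0 //; first lia.
  case: m IH hl => [|m] IH hl; last by rewrite orbT.
  rewrite orbF; apply/eqP; lia.
by rewrite (Nz H) ?mul0r // ltnNge hkr !andbF.
Qed.

Lemma mxinv_ext (F : fieldType) n (a : mx F) i j K : isUT n a ->
  (j - i < K)%N -> mxinv n a i j = \sum_(m < K) Pw n a m i j.
Proof.
move=> H hK; rewrite mxinvE -!(big_mkord xpredT (fun m => Pw n a m i j)).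
rewrite [RHS](big_cat_nat _ (n:=(j - i).+1)) //=.
rewrite [X in _ = _ + X]big1_seq ?addr0 // => m.
rewrite mem_index_iota => /andP[h1 h2]; apply: P_high => //; first lia.
by rewrite orbC; case: m h1 h2 => //.
Qed.

Lemma mxinv_UT (F : fieldType) n (a : mx F) : isUT n a -> isUT n (mxinv n a).
Proof.
move=> H i j hij.
case: (inrange n i) / idP => hi; last first.
  rewrite idm_outl; last by apply/negP.
  by rewrite mxinvE big1 // => m _; rewrite P_outl //; apply/negP.
case: (inrange n j) / idP => hj; last first.
  rewrite idm_outr; last by apply/negP.
  by rewrite mxinvE big1 // => m _; rewrite P_outr //; apply/negP.
move: hij; rewrite hi hj /= -leqNgt => hji.
rewrite mxinvE; have -> : (j - i = 0)%N by lia.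
by rewrite big_ord1.
Qed.

Lemma mulV (F : fieldType) n (a : mx F) : isUT n a -> mxmul a (mxinv n a) = idm F n.
Proof.
move=> H; apply: functional_extensionality => i; apply: functional_extensionality => j.
set K := (j - i).+1.
rewrite /mxmul.
have E : forall k, (i <= k < j.+1)%N -> a i k * mxinv n a k j =
   idm F n i k * mxinv n a k j - \sum_(m < K) Nm n a i k * Pw n a m k j.
  move=> k /andP[h1 h2]; rewrite (@mxinv_ext _ _ _ k j K) //; last by rewrite /K; lia.
  by rewrite -mulr_sumr /Nm mulrBl opprB addrC subrK.
rewrite (eq_big_nat _ _ E) big_split /= sumrN.
rewrite exchange_big /=.
under [X in _ - X = _]eq_bigr => m _ do rewrite -PwS.
under eq_bigr => k _ do rewrite idmE_l (fun_if (fun x => x * mxinv n a k j)) mul0r.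
rewrite sum_delta leqnn /=.
have -> : \sum_(m < K) Pw n a m.+1 i j = mxinv n a i j - idm F n i j.
  rewrite (@mxinv_ext _ _ _ i j K.+1) //.
  rewrite [in RHS]big_ord_recl; have ->: Pw n a 0 i j = idm F n i j by []. rewrite addrAC subrr add0r; apply: eq_bigr => m _; by [].
case: (inrange n i) / idP => hi; last first.
  rewrite idm_outl; last by apply/negP.
  rewrite (UT_outl (mxinv_UT H)); last by apply/negP.
  by rewrite mul0r if_same !subrr.
case: (leqP i j) => hij.
  have -> : (i < j.+1)%N = true by lia.
  by rewrite mul1r opprB addrC subrK.
have -> : (i < j.+1)%N = false by lia.
rewrite (UT_lt (mxinv_UT H)) // idm_neq; last by apply/eqP; lia.
by rewrite !subrr.
Qed.

Lemma mulVl (F : fieldType) n (a : mx F) : isUT n a -> mxmul (mxinv n a) a = idm F n.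
Proof.
move=> H; have Hb := mxinv_UT H; have Hc := mxinv_UT Hb.
rewrite -[LHS](mulM1 (mxmul_UT Hb H)) -(mulV Hb) -mxmulA [mxmul (mxmul _ a) _]mxmulA.
by rewrite mulV // mulM1.
Qed.

Lemma mxinvK (F : fieldType) n (a : mx F) : isUT n a -> mxinv n (mxinv n a) = a.
Proof.
move=> H; have Hb := mxinv_UT H; have Hc := mxinv_UT Hb.
by rewrite -[RHS](mulM1 H) -(mulV Hb) -mxmulA mulV // mul1M.
Qed.

Lemma comm_eq (F : fieldType) n (x y z : mx F) : isUT n x -> isUT n y -> isUT n z ->
  mxmul (mxmul z y) x = mxmul x y -> comm n x y = z.
Proof.
move=> Hx Hy Hz E; have Hzy := mxmul_UT Hz Hy.
move: E; rewrite /comm => <-; rewrite [mxmul (mxmul (mxmul z y) x) _]mxmulA mulV // mulM1 //.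
by rewrite mxmulA mulV // mulM1.
Qed.

Lemma P_local (F : fieldType) n (a c : mx F) i j :
  (forall k l, (i <= k)%N -> (l <= j)%N -> a k l = c k l) ->
  forall m k l, (i <= k)%N -> (l <= j)%N -> Pw n a m k l = Pw n c m k l.
Proof.
move=> E; elim => [|m IH] k l hk hl //.
rewrite !PwS; apply: eq_big_nat => r /andP[h1 h2].
rewrite /Nm E ?IH //; lia.
Qed.

Lemma mxinv_local (F : fieldType) n (a c : mx F) i j :
  (forall k l, (i <= k)%N -> (l <= j)%N -> a k l = c k l) ->
  mxinv n a i j = mxinv n c i j.
Proof.
move=> E; rewrite !mxinvE; apply: eq_bigr => m _; apply: (@P_local F n a c i j E m i j) => //.
Qed.

Definition Xv (F : fieldType) n (v : nat -> F) : mx F :=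
  fun k l => idm F n k l + (if k == 1%N then v l else 0).

Lemma mul1M_e (F : fieldType) n (a : mx F) k l : isUT n a ->
  \sum_(k <= r < l.+1) idm F n k r * a r l = a k l.
Proof. by move=> H; have := f_equal (fun f => f k l) (mul1M H). Qed.

Lemma mulM1_e (F : fieldType) n (a : mx F) k l : isUT n a ->
  \sum_(k <= r < l.+1) a k r * idm F n r l = a k l.
Proof. by move=> H; have := f_equal (fun f => f k l) (mulM1 H). Qed.

Lemma transv_UT (F : fieldType) n p q (c : F) : inrange n p -> inrange n q -> (p < q)%N ->
  isUT n (transv n p q c).
Proof.
move=> hp hq hpq k l H; rewrite /transv.
case: (eqVneq k p) => [Ek|]; case: (eqVneq l q) => [El|] //=; rewrite ?addr0 //.
by move: H; rewrite Ek El hp hq hpq.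
Qed.

Lemma mul_transv_l (F : fieldType) n (a : mx F) p q (c : F) : isUT n a -> (p <= q)%N ->
  mxmul (transv n p q c) a = fun k l => a k l + (if k == p then c * a q l else 0).
Proof.
move=> H hpq; apply: functional_extensionality => k; apply: functional_extensionality => l.
rewrite /mxmul /transv; under eq_bigr => r _ do rewrite mulrDl.
rewrite big_split /= mul1M_e //; congr (_ + _).
case: (eqVneq k p) => [->|_] /=; last by rewrite big1 // => r _; rewrite mul0r.
under eq_bigr => r _ do rewrite (fun_if (fun x => x * a r l)) mul0r.
rewrite sum_delta hpq /=; case: leqP => // hql.
by rewrite (UT_lt H) // mulr0.
Qed.

Lemma mul_transv_r (F : fieldType) n (a : mx F) p q (c : F) : isUT n a -> (p <= q)%N ->
  mxmul a (transv n p q c) = fun k l => a k l + (if l == q then a k p * c else 0).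
Proof.
move=> H hpq; apply: functional_extensionality => k; apply: functional_extensionality => l.
rewrite /mxmul /transv; under eq_bigr => r _ do rewrite mulrDr.
rewrite big_split /= mulM1_e //; congr (_ + _).
case: (eqVneq l q) => [->|_] /=; last first.
  by rewrite big1 // => r _; rewrite andbF mulr0.
under eq_bigr => r _ do rewrite andbT (fun_if (fun x => a k r * x)) mulr0.
rewrite sum_delta; case: (leqP k p) => hkp /=.
  by have -> : (p < q.+1)%N = true by lia.
by rewrite (UT_lt H) // mul0r.
Qed.

Lemma mul_X_r (F : fieldType) n (M : mx F) (v : nat -> F) : isUT n M -> inrange n 1 -> v 0%N = 0 ->
  mxmul M (Xv n v) = fun k l => M k l + (if k == 1%N then v l else 0).
Proof.
move=> H h1 hv; apply: functional_extensionality => k; apply: functional_extensionality => l.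
rewrite /mxmul /Xv; under eq_bigr => r _ do rewrite mulrDr.
rewrite big_split /= mulM1_e //; congr (_ + _).
under eq_bigr => r _ do rewrite (fun_if (fun x => M k r * x)) mulr0.
rewrite sum_delta.
case: (eqVneq k 1%N) => [->|hk].
  rewrite leqnn (UT_diag _ H) h1 mul1r /=; case: l => //.
case: ifP => // /andP[h h']; have -> : k = 0%N by lia.
by rewrite (UT_outl H) ?mul0r.
Qed.

Lemma mul_X_l (F : fieldType) n (a : mx F) (v : nat -> F) : isUT n a ->
  mxmul (Xv n v) a = fun k l => a k l + (if k == 1%N then \sum_(1 <= r < l.+1) v r * a r l else 0).
Proof.
move=> H; apply: functional_extensionality => k; apply: functional_extensionality => l.
rewrite /mxmul /Xv; under eq_bigr => r _ do rewrite mulrDl.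
rewrite big_split /= mul1M_e //; congr (_ + _).
case: (eqVneq k 1%N) => [->|hk] //.
by rewrite big1 // => r _; rewrite mul0r.
Qed.

Lemma XUT (F : fieldType) n (v : nat -> F) : inrange n 1 ->
  (forall l, ~~ (inrange n l && (1 < l)%N) -> v l = 0) -> isUT n (Xv n v).
Proof.
move=> h1 hv k l H; rewrite /Xv; case: (eqVneq k 1%N) => [Ek|]; last by rewrite addr0.
rewrite hv ?addr0 //; by move: H; rewrite Ek h1.
Qed.

Lemma C2 (F : fieldType) n (v : nat -> F) q N : inrange n 1 ->
  (forall l, ~~ (inrange n l && (1 < l)%N) -> v l = 0) ->
  inrange n q -> inrange n N -> (q < N)%N ->
  comm n (Xv n v) (transv n q N 1) = transv n 1 N (v q).
Proof.
move=> h1 hv hq hN hqN.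
have HX := XUT h1 hv.
have HS : isUT n (transv n q N (1:F)) := @transv_UT F n q N 1 hq hN hqN.
have h1N : (1 < N)%N by move: hq; rewrite /inrange => /andP[? _]; lia.
have HZ : isUT n (transv n 1 N (v q)) := @transv_UT F n 1 N (v q) h1 hN h1N.
have HZS := mxmul_UT HZ HS.
have hNq : (N == q) = false by apply/eqP; lia.
have hv1 : v 1%N = 0 by apply: hv; rewrite ltnn andbF.
apply: comm_eq => //.
rewrite mul_X_r //; last by rewrite hv // /inrange.
rewrite mul_transv_l //; last by lia.
rewrite mul_transv_r //; last by lia.
apply: functional_extensionality => k; apply: functional_extensionality => l.
rewrite /Xv /transv.
rewrite [idm F n N l]idmE_l [idm F n k q]idmE_r hN hq.
case: (eqVneq l N) => [El|nl]; case: (eqVneq k 1%N) => [Ek|nk]; case: (eqVneq k q) => [Eq|nq];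
  rewrite ?El ?Ek ?Eq ?eqxx ?hNq /= ?andbT ?andbF ?mulr1 ?mulr0 ?addr0 ?add0r ?addr0 ?mulr0 ?mulr1 //.
all: try (by exfalso; lia).
all: ring.
Qed.

Lemma inrange1 (n : dimn) (p : nat) : inrange n p -> inrange n 1.
Proof.
rewrite /inrange; case: n => [m|] /= /andP[h1 h2] //.
lia.
Qed.

Lemma sum_from (F : fieldType) (g : nat -> F) p h : (forall r, (r < p)%N -> g r = 0) -> (1 <= p)%N ->
  \sum_(1 <= r < h) g r = \sum_(p <= r < h) g r.
Proof.
move=> hg hp; case: (leqP p h) => hph.
  rewrite (big_cat_nat _ (n:=p)) //= big1_seq ?add0r // => r.
  by move=> /andP[_]; rewrite mem_index_iota => /andP[_ hr]; apply: hg.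
rewrite [RHS]big_geq; last exact: ltnW hph.
rewrite big1_seq // => r.
rewrite mem_index_iota => /andP[_ hr]; apply: hg; lia.
Qed.

Definition vb (F : fieldType) n (a : mx F) p : nat -> F := fun l => (l == p)%:R - mxinv n a p l.

Lemma vb_cond (F : fieldType) n (a : mx F) p : isUT n a -> inrange n p -> (1 < p)%N ->
  forall l, ~~ (inrange n l && (1 < l)%N) -> vb n a p l = 0.
Proof.
move=> Ha hp h1p l hl; rewrite /vb.
have Hb := mxinv_UT Ha.
case: (inrange n l) / idP hl => hl /= hl'.
  have hlp : (l < p)%N by lia.
  have -> : (l == p) = false by apply/eqP; lia.
  by rewrite (UT_lt Hb) // subr0.
rewrite (UT_outr Hb); last by apply/negP.
have -> : (l == p) = false by apply/eqP => E; apply: hl; rewrite E.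
by rewrite subr0.
Qed.

Lemma C1 (F : fieldType) n (a : mx F) p : isUT n a -> inrange n p -> (1 < p)%N ->
  comm n (transv n 1 p 1) a = Xv n (vb n a p).
Proof.
move=> Ha hp h1p.
have h1 := inrange1 hp.
have hv := vb_cond Ha hp h1p.
have HX := XUT h1 hv.
have HT : isUT n (transv n 1 p (1:F)) := @transv_UT F n 1 p 1 h1 hp h1p.
have Hb := mxinv_UT Ha.
have hv1 : vb n a p 1 = 0 by apply: hv; rewrite ltnn andbF.
apply: comm_eq => //.
rewrite mul_transv_r; [|exact: (mxmul_UT HX Ha)|by lia].
rewrite mul_X_l // mul_transv_l //; last by lia.
apply: functional_extensionality => k; apply: functional_extensionality => l.
have Ssum : \sum_(1 <= r < l.+1) vb n a p r * a r l = a p l - idm F n p l.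
  rewrite /vb; under eq_bigr => r _ do rewrite mulrBl.
  rewrite sumrB; congr (_ - _).
    have -> : \sum_(1 <= r < l.+1) (r == p)%:R * a r l =
              \sum_(1 <= r < l.+1) (if r == p then a r l else 0).
      by apply: eq_bigr => r _; case: eqP; rewrite ?mul1r ?mul0r.
    rewrite sum_delta; case: ifP => // /negbT; rewrite negb_and -!ltnNge => /orP[h|h]; first lia.
    by rewrite (UT_lt Ha) //; lia.
  rewrite (sum_from (p:=p)); last by lia.
    by have := f_equal (fun f => f p l) (mulVl Ha).
  by move=> r hr; rewrite (UT_lt Hb) ?mul0r.
have S1 : \sum_(1 <= r < 2) vb n a p r * a r 1%N = 0 by rewrite big_nat1 hv1 mul0r.
rewrite Ssum S1 [idm F n p l]idmE_l hp.
case: (eqVneq k 1%N) => [->|nk].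
  rewrite (UT_diag _ Ha) h1 /=; case: (eqVneq l p) => [->|nl]; rewrite /=; ring.
rewrite (_ : a k 1%N = 0); first by case: (l == p); rewrite ?add0r ?mul0r ?addr0.
case: (ltnP 1 k) => hk; first by rewrite (UT_lt Ha).
have -> : k = 0%N by lia.
by rewrite (UT_outl Ha).
Qed.

Lemma range_next (n : dimn) (q : nat) : inrange n q -> (if n is Some m then (q <= m.-1)%N else true) ->
  inrange n (if n is Some m then m else q.+1) /\ (q < (if n is Some m then m else q.+1))%N.
Proof.
rewrite /inrange; case: n => [m|] /= /andP[h1 h2] h3.
  split; [apply/andP; split|]; lia.
split; lia.
Qed.

Lemma jcond_le (n : dimn) (l j : nat) : (l <= j)%N -> (if n is Some m then (j <= m.-1)%N else true) ->
  (if n is Some m then (l <= m.-1)%N else true).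
Proof. case: n => [m|] //; lia. Qed.

Theorem mainTheorem1 (F : fieldType) (n : dimn) (phi : mx F -> mx F)
  (Hpc : is_PCmap n phi) (Hai : almost_identity n phi)
  (a : mx F) (Ha : isUT n a) (i j : nat)
  (Hi : inrange n i) (Hi2 : (2 <= i)%N)
  (Hj : inrange n j) (Hjn : if n is Some m then (j <= m.-1)%N else true) :
  phi a i j = a i j /\ mxinv n (phi a) i j = mxinv n a i j.
Proof.
case: Hpc => HUT Hinj Hsurj Hcomm.
have HphiUT := HUT a Ha.
have KeyA : forall p q, (2 <= p)%N -> (if n is Some m then (q <= m.-1)%N else true) ->
    mxinv n (phi a) p q = mxinv n a p q.
  move=> p q h2p hqn.
  have Hb := mxinv_UT Ha; have Hb' := mxinv_UT HphiUT.
  case: (boolP [&& inrange n p, inrange n q & (p < q)%N]) => H; last by rewrite Hb // Hb'.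
  case/and3P: H => hp hq hpq.
  pose N := if n is Some m then m else q.+1.
  have [hN hqN] : inrange n N /\ (q < N)%N by apply: range_next.
  have h1p : (1 < p)%N by lia.
  have h1 := inrange1 hp.
  have HS : isUT n (transv n q N (1:F)) := @transv_UT F n q N 1 hq hN hqN.
  have HT : isUT n (transv n 1 p (1:F)) := @transv_UT F n 1 p 1 h1 hp h1p.
  have HX : isUT n (comm n (transv n 1 p 1) a).
    by rewrite (C1 Ha hp h1p); apply: XUT => //; apply: vb_cond.
  have key : phi (comm n (comm n (transv n 1 p 1) a) (transv n q N 1)) =
             comm n (comm n (transv n 1 p 1) (phi a)) (transv n q N 1).
    by rewrite Hcomm // Hcomm // !Hai.
  rewrite (C1 Ha hp h1p) (C1 HphiUT hp h1p) !C2 // in key; try exact: vb_cond.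
  rewrite Hai // in key; last by lia.
  have := f_equal (fun f => f 1%N N) key; rewrite /transv /vb !eqxx /=.
  by move/addrI/subrI.
split; last exact: KeyA.
rewrite -[in LHS](mxinvK HphiUT) -[in RHS](mxinvK Ha).
apply: mxinv_local => k l hk hl; apply: KeyA; first lia.
exact: (jcond_le hl Hjn).
Qed.
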